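(* Let $\{(\mathbf{x}_i,t_i,\delta_i)\}_{i=1}^n$ be a dataset with $\mathbf{x}_i\in\mathbb{R}^p$, $t_i\in\mathbb{R}$, $\delta_i\in\{0,1\}$, let $\mathbf{X}$ have rows $\mathbf{x}_i^T$ (entries $X_{kl}$), $R_i=\{j:t_j\ge t_i\}$, and $$\ell(\boldsymbol\beta)=\sum_{i=1}^n\delta_i\Big[\log\Big(\sum_{j\in R_i}e^{\mathbf{x}_j^T\boldsymbol\beta}\Big)-\mathbf{x}_i^T\boldsymbol\beta\Big].$$ Then for every $\boldsymbol\beta\in\mathbb{R}^p$ and every $l\in\{1,\dots,p\}$, $$0\le\frac{\partial^2\ell(\boldsymbol\beta)}{\partial\beta_l^2}\le\frac14\sum_{i=1}^n\delta_i\Big(\max_{k\in R_i}X_{kl}-\min_{k\in R_i}X_{kl}\Big)^2$$ and $$\Big|\frac{\partial^3\ell(\boldsymbol\beta)}{\partial\beta_l^3}\Big|\le\frac{1}{6\sqrt3}\sum_{i=1}^n\delta_i\Big|\max_{k\in R_i}X_{kl}-\min_{k\in R_i}X_{kl}\Big|^3.$$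
   Context: $\ell$ is the Cox negative log partial likelihood. Consequently the first and second order partial derivatives in each coordinate are Lipschitz with these constants (this is the paper's interpretation, not part of the claim). *)

(* Defs.v *)
From Stdlib Require Import Reals List Arith.
From Coquelicot Require Import Coquelicot.
Open Scope R_scope.

Definition rsum (m : nat) (f : nat -> R) : R :=
  fold_right Rplus 0 (map f (seq 0 m)).

Definition in_risk (t : nat -> R) (i j : nat) : bool :=
  if Rle_dec (t i) (t j) then true else false.

(* max / min of X_{k l} over k in R_i (k < n); R_i contains i, so we start
   the fold at X_{i l}. *)
Definition risk_max (n : nat) (X : nat -> nat -> R) (t : nat -> R) (i l : nat) : R :=
  fold_right (fun k acc => if in_risk t i k then Rmax (X k l) acc else acc)
    (X i l) (seq 0 n).
Definition risk_min (n : nat) (X : nat -> nat -> R) (t : nat -> R) (i l : nat) : R :=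
  fold_right (fun k acc => if in_risk t i k then Rmin (X k l) acc else acc)
    (X i l) (seq 0 n).

Definition b2R (b : bool) : R := if b then 1 else 0.

Definition xbeta (p : nat) (X : nat -> nat -> R) (beta : nat -> R) (j : nat) : R :=
  rsum p (fun k => X j k * beta k).

Definition cox_loss (n p : nat) (X : nat -> nat -> R) (t : nat -> R)
    (delta : nat -> bool) (beta : nat -> R) : R :=
  rsum n (fun i => b2R (delta i) *
    (ln (rsum n (fun j => if in_risk t i j then exp (xbeta p X beta j) else 0))
     - xbeta p X beta i)).

Definition upd (beta : nat -> R) (l : nat) (s : R) : nat -> R :=
  fun k => if Nat.eqb k l then s else beta k.

Definition partial_n (f : (nat -> R) -> R) (k l : nat) (beta : nat -> R) : R :=
  Derive_n (fun s => f (upd beta l s)) k (beta l).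

(* Main.v *)
Require Import Defs.
From Stdlib Require Import Reals List Arith Lra Lia.
From Coquelicot Require Import Coquelicot.
Open Scope R_scope.

Lemma dplus (f g : R -> R) x a b : is_derive f x a -> is_derive g x b ->
  is_derive (fun y => f y + g y) x (a + b).
Proof. intros Hf Hg; exact (is_derive_plus f g x a b Hf Hg). Qed.
Lemma dminus (f g : R -> R) x a b : is_derive f x a -> is_derive g x b ->
  is_derive (fun y => f y - g y) x (a - b).
Proof. intros Hf Hg; exact (is_derive_minus f g x a b Hf Hg). Qed.
Lemma dmult (f g : R -> R) x a b : is_derive f x a -> is_derive g x b ->
  is_derive (fun y => f y * g y) x (a * g x + f x * b).
Proof. intros Hf Hg; exact (is_derive_mult f g x a b Hf Hg Rmult_comm). Qed.
Lemma dconst (c x : R) : is_derive (fun _ => c) x 0.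
Proof. exact (is_derive_const c x). Qed.
Lemma dval (f : R -> R) (x a b : R) : is_derive f x a -> a = b -> is_derive f x b.
Proof. intros H ->; exact H. Qed.

Lemma rsum_S m f : rsum (S m) f = rsum m f + f m.
Proof.
  unfold rsum. rewrite seq_S, map_app, fold_right_app. simpl.
  generalize (f m). induction (map f (seq 0 m)) as [|a L IH]; intro r; simpl.
  - lra.
  - rewrite IH. lra.
Qed.
Lemma rsum_0 f : rsum 0 f = 0.
Proof. reflexivity. Qed.

Lemma rsum_ext m f g : (forall j, (j < m)%nat -> f j = g j) -> rsum m f = rsum m g.
Proof.
  induction m; intro H. reflexivity.
  rewrite !rsum_S, IHm, H; auto.
Qed.
Lemma rsum_nonneg m f : (forall j, (j < m)%nat -> 0 <= f j) -> 0 <= rsum m f.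
Proof.
  induction m; intro H. rewrite rsum_0; lra.
  rewrite rsum_S. assert (0 <= f m) by auto. assert (0 <= rsum m f) by auto. lra.
Qed.
Lemma rsum_le m f g : (forall j, (j < m)%nat -> f j <= g j) -> rsum m f <= rsum m g.
Proof.
  induction m; intro H. rewrite !rsum_0; lra.
  rewrite !rsum_S. assert (f m <= g m) by auto. assert (rsum m f <= rsum m g) by auto. lra.
Qed.
Lemma rsum_scal m c f : c * rsum m f = rsum m (fun j => c * f j).
Proof.
  induction m. rewrite !rsum_0; ring. rewrite !rsum_S, <- IHm; ring.
Qed.
Lemma rsum_abs m f : Rabs (rsum m f) <= rsum m (fun j => Rabs (f j)).
Proof.
  induction m. rewrite !rsum_0, Rabs_R0; lra.
  rewrite !rsum_S. eapply Rle_trans. apply Rabs_triang. lra.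
Qed.
Lemma rsum_ge_term m f i : (forall j, (j < m)%nat -> 0 <= f j) -> (i < m)%nat -> f i <= rsum m f.
Proof.
  induction m; intros H Hi. lia.
  rewrite rsum_S. destruct (Nat.eq_dec i m) as [->|Hne].
  - assert (0 <= rsum m f) by (apply rsum_nonneg; auto). lra.
  - assert (f i <= rsum m f) by (apply IHm; auto; lia). assert (0 <= f m) by auto. lra.
Qed.
Lemma rsum_poly m e y c0 c1 c2 c3 :
  rsum m (fun j => e j * (c0 + c1 * y j + c2 * y j ^ 2 + c3 * y j ^ 3)) =
  c0 * rsum m e + c1 * rsum m (fun j => e j * y j) + c2 * rsum m (fun j => e j * y j ^ 2)
  + c3 * rsum m (fun j => e j * y j ^ 3).
Proof.
  induction m. rewrite !rsum_0; ring. rewrite !rsum_S, IHm; ring.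
Qed.
Lemma rsum_derive m (F : nat -> R -> R) F' x :
  (forall j, (j < m)%nat -> is_derive (F j) x (F' j)) ->
  is_derive (fun s => rsum m (fun j => F j s)) x (rsum m F').
Proof.
  induction m; intro H.
  - apply (is_derive_ext (fun _ => 0)). intros; reflexivity. rewrite rsum_0. apply dconst.
  - apply (is_derive_ext (fun s => rsum m (fun j => F j s) + F m s)).
    intros; rewrite rsum_S; reflexivity.
    rewrite rsum_S. apply dplus; auto.
Qed.

Lemma sqrt3_facts : 0 < sqrt 3 /\ sqrt 3 * sqrt 3 = 3 /\ sqrt 3 < 2.
Proof.
  split. apply sqrt_lt_R0; lra. split. apply sqrt_sqrt; lra.
  rewrite <- (sqrt_square 2) by lra. apply sqrt_lt_1; lra.
Qed.

Lemma cube_bound a b V T : 0 <= a -> 0 <= b -> 0 <= V -> V <= a * b ->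
  T <= (b - 2 * a) * V + a ^ 2 * b -> T <= b ^ 3 / 4 ->
  6 * sqrt 3 * T <= (a + b) ^ 3.
Proof.
  intros Ha Hb HV HVab H1 H2.
  destruct sqrt3_facts as [Hs0 [Hss Hs2]]. set (s := sqrt 3) in *.
  destruct (Rle_lt_dec (2 * a) b) as [Hc|Hc].
  - assert (T <= a * b * (b - a)).
    { assert ((b - 2*a) * V <= (b - 2*a) * (a*b)) by (apply Rmult_le_compat_l; lra). nra. }
    set (x := b - a). set (D := a + b).
    assert (E : (s*x - D)^2 * (s*x + 2*D) = 3*s*x^3 - 3*s*D^2*x + 2*D^3 + (s*s-3)*s*x^3) by ring.
    rewrite Hss in E. replace (3 - 3) with 0 in E by ring.
    assert (0 <= (s*x - D)^2 * (s*x + 2*D)).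
    { apply Rmult_le_pos. apply pow2_ge_0. unfold x, D; nra. }
    assert (a * b * (b - a) = (D^2 - x^2) * x / 4) by (unfold x, D; field).
    assert (6 * s * T <= 6 * s * (a * b * (b - a))) by (apply Rmult_le_compat_l; lra).
    nra.
  - assert ((3 * b / 2) ^ 3 <= (a + b) ^ 3) by (apply pow_incr; lra).
    assert (0 <= b ^ 3) by (apply pow_le; lra).
    assert (6 * s * T <= 6 * s * (b^3/4)) by (apply Rmult_le_compat_l; lra).
    nra.
Qed.

Lemma rsum_poly' m e y G c0 c1 c2 c3 :
  (forall j, G j = c0 + c1 * y j + c2 * y j ^ 2 + c3 * y j ^ 3) ->
  rsum m (fun j => e j * G j) =
  c0 * rsum m e + c1 * rsum m (fun j => e j * y j) + c2 * rsum m (fun j => e j * y j ^ 2)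
  + c3 * rsum m (fun j => e j * y j ^ 3).
Proof.
  intro H. rewrite <- rsum_poly. apply rsum_ext. intros; rewrite H; reflexivity.
Qed.

Lemma moments m e y lo hi :
  (forall j, (j < m)%nat -> 0 <= e j) ->
  (forall j, (j < m)%nat -> e j <> 0 -> lo <= y j <= hi) ->
  0 < rsum m (fun j => e j * y j ^ 0) ->
  let Z := rsum m (fun j => e j * y j ^ 0) in
  let m1 := rsum m (fun j => e j * y j ^ 1) / Z in
  let m2 := rsum m (fun j => e j * y j ^ 2) / Z in
  let m3 := rsum m (fun j => e j * y j ^ 3) / Z in
  (0 <= m2 - m1 ^ 2 /\ m2 - m1 ^ 2 <= / 4 * (hi - lo) ^ 2) /\
  Rabs (m3 - 3 * m1 * m2 + 2 * m1 ^ 3) <= / (6 * sqrt 3) * Rabs (hi - lo) ^ 3.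
Proof.
  intros He Hy HZ Z m1 m2 m3. fold Z in HZ.
  assert (EZ : Z = rsum m e) by (unfold Z; apply rsum_ext; intros; simpl; ring).
  assert (E1 : rsum m (fun j => e j * y j ^ 1) = rsum m (fun j => e j * y j))
    by (apply rsum_ext; intros; simpl; ring).
  set (W1 := rsum m (fun j => e j * y j)) in *.
  set (W2 := rsum m (fun j => e j * y j ^ 2)) in *.
  set (W3 := rsum m (fun j => e j * y j ^ 3)) in *.
  set (mu := m1).
  assert (HW1 : W1 = mu * Z) by (unfold mu, m1; rewrite E1; field; lra).
  assert (NN : forall g : R -> R, (forall v, lo <= v <= hi -> 0 <= g v) ->
             0 <= rsum m (fun j => e j * g (y j))).
  { intros g Hg. apply rsum_nonneg. intros j Hj.
    destruct (Req_dec (e j) 0) as [E0|E0]. rewrite E0; lra.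
    apply Rmult_le_pos; auto. }
  assert (Hlo := NN (fun v => v - lo) ltac:(intros; lra)).
  erewrite (rsum_poly' m e y _ (-lo) 1 0 0) in Hlo by (intros; simpl; ring).
  assert (Hhi := NN (fun v => hi - v) ltac:(intros; lra)).
  erewrite (rsum_poly' m e y _ hi (-1) 0 0) in Hhi by (intros; simpl; ring).
  rewrite <- EZ in Hlo, Hhi. fold W1 W2 W3 in Hlo, Hhi.
  rewrite HW1 in Hlo, Hhi.
  assert (Ha : 0 <= mu - lo).
  { assert (0 <= (mu - lo) * Z) by lra. apply (Rmult_le_reg_r Z); lra. }
  assert (Hb : 0 <= hi - mu).
  { assert (0 <= (hi - mu) * Z) by lra. apply (Rmult_le_reg_r Z); lra. }
  set (a := mu - lo) in *. set (b := hi - mu) in *.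
  set (S2 := W2 - 2 * mu * W1 + mu ^ 2 * Z).
  set (S3 := W3 - 3 * mu * W2 + 3 * mu ^ 2 * W1 - mu ^ 3 * Z).
  assert (F : forall c0 c1 c2 c3 (g : R -> R),
    (forall v, lo <= v <= hi -> 0 <= g v) ->
    (forall v, g v = c0 + c1 * (v - mu) + c2 * (v - mu) ^ 2 + c3 * (v - mu) ^ 3) ->
    0 <= c0 * Z + c2 * S2 + c3 * S3).
  { intros c0 c1 c2 c3 g Hg Eg. assert (H := NN g Hg).
    erewrite (rsum_poly' m e y _ (c0 - c1*mu + c2*mu^2 - c3*mu^3)
               (c1 - 2*c2*mu + 3*c3*mu^2) (c2 - 3*c3*mu) c3) in H
      by (intros; rewrite Eg; ring).
    rewrite <- EZ in H. fold W1 W2 W3 in H. unfold S2, S3.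
    rewrite HW1 in H |- *. nra. }
  assert (F0 := F 0 0 1 0 (fun v => (v - mu)^2) ltac:(intros; apply pow2_ge_0) ltac:(intros; cbv beta; ring)).
  assert (F1 := F (a*b) (b-a) (-1) 0 (fun v => (v - mu + a) * (b - (v - mu)))
                ltac:(intros; unfold a, b; nra) ltac:(intros; cbv beta; ring)).
  assert (F2 := F (a^2*b) (2*a*b - a^2) (b - 2*a) (-1)
                (fun v => (b - (v - mu)) * (v - mu + a)^2)
                ltac:(intros; apply Rmult_le_pos; [unfold b; lra | apply pow2_ge_0])
                ltac:(intros; cbv beta; ring)).
  assert (F3 := F (b^3/4) (3*b^2/4) 0 (-1)
                (fun v => (b - (v - mu)) * (v - mu + b/2)^2)
                ltac:(intros; apply Rmult_le_pos; [unfold b; lra | apply pow2_ge_0])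
                ltac:(intros; cbv beta; field)).
  assert (F4 := F (a*b^2) (b^2 - 2*a*b) (a - 2*b) 1
                (fun v => (v - mu + a) * (b - (v - mu))^2)
                ltac:(intros; apply Rmult_le_pos; [unfold a; lra | apply pow2_ge_0])
                ltac:(intros; cbv beta; ring)).
  assert (F5 := F (a^3/4) (-(3*a^2/4)) 0 1
                (fun v => (v - mu + a) * (v - mu - a/2)^2)
                ltac:(intros; apply Rmult_le_pos; [unfold a; lra | apply pow2_ge_0])
                ltac:(intros; cbv beta; field)).
  set (V := S2 / Z). set (T := S3 / Z).
  assert (ES2 : S2 = V * Z) by (unfold V; field; lra).
  assert (ES3 : S3 = T * Z) by (unfold T; field; lra).
  rewrite ES2, ES3 in F0, F1, F2, F3, F4, F5.
  assert (G0 : 0 <= V) by nra.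
  assert (G1 : V <= a * b) by nra.
  assert (G2 : T <= (b - 2*a) * V + a^2 * b) by nra.
  assert (G3 : T <= b^3/4) by nra.
  assert (G4 : -T <= (a - 2*b) * V + b^2 * a) by nra.
  assert (G5 : -T <= a^3/4) by nra.
  assert (EV : m2 - mu ^ 2 = V).
  { unfold V, S2, m2. fold mu. rewrite HW1. field. lra. }
  assert (ET : m3 - 3 * mu * m2 + 2 * mu ^ 3 = T).
  { unfold T, S3, m3, m2. fold mu. rewrite HW1. field. lra. }
  rewrite EV, ET.
  assert (Hd : hi - lo = a + b) by (unfold a, b; ring).
  rewrite Hd. rewrite (Rabs_pos_eq (a + b)) by lra.
  split. split. lra.
  assert (0 <= (a - b)^2) by apply pow2_ge_0. assert (a * b <= / 4 * (a + b)^2) by nra. lra.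
  assert (U1 := cube_bound a b V T Ha Hb G0 G1 G2 G3).
  assert (U2 := cube_bound b a V (-T) Hb Ha G0 ltac:(lra) ltac:(nra) G5).
  destruct sqrt3_facts as [Hs0 _].
  assert (0 < 6 * sqrt 3) by lra.
  replace (b + a) with (a + b) in U2 by ring.
  set (k := / (6 * sqrt 3)).
  assert (Hk : k * (6 * sqrt 3) = 1) by (unfold k; field; lra).
  assert (Hk0 : 0 <= k) by (unfold k; left; apply Rinv_0_lt_compat; lra).
  assert (ET1 : T = k * (6 * sqrt 3 * T)) by (rewrite <- Rmult_assoc, Hk; ring).
  assert (ET2 : -T = k * (6 * sqrt 3 * -T)) by (rewrite <- Rmult_assoc, Hk; ring).
  assert (k * (6 * sqrt 3 * T) <= k * (a+b)^3) by (apply Rmult_le_compat_l; lra).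
  assert (k * (6 * sqrt 3 * -T) <= k * (a+b)^3) by (apply Rmult_le_compat_l; lra).
  apply Rabs_le. lra.
Qed.

Lemma xbeta_upd_gen p X beta l s j :
  xbeta p X (upd beta l s) j =
  xbeta p X beta j + (if Nat.ltb l p then X j l * (s - beta l) else 0).
Proof.
  unfold xbeta. induction p.
  - rewrite !rsum_0. simpl. ring.
  - rewrite !rsum_S, IHp. unfold upd.
    destruct (Nat.eqb p l) eqn:E.
    + apply Nat.eqb_eq in E. subst l.
      assert (Nat.ltb p p = false) by (apply Nat.ltb_ge; lia).
      assert (Nat.ltb p (S p) = true) by (apply Nat.ltb_lt; lia).
      rewrite H, H0. ring.
    + apply Nat.eqb_neq in E.
      destruct (Nat.ltb l p) eqn:E1.
      * apply Nat.ltb_lt in E1.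
        assert (Nat.ltb l (S p) = true) by (apply Nat.ltb_lt; lia). rewrite H. ring.
      * apply Nat.ltb_ge in E1.
        assert (Nat.ltb l (S p) = false) by (apply Nat.ltb_ge; lia). rewrite H. ring.
Qed.

Lemma xbeta_upd p X beta l s j : (l < p)%nat ->
  xbeta p X (upd beta l s) j = xbeta p X beta j + X j l * (s - beta l).
Proof.
  intro H. rewrite xbeta_upd_gen. assert (Nat.ltb l p = true) by (apply Nat.ltb_lt; auto).
  rewrite H0. ring.
Qed.

Definition ee p X t beta l i j s :=
  b2R (in_risk t i j) * exp (xbeta p X beta j + X j l * (s - beta l)).
Definition Zk n p X t beta l i k s :=
  rsum n (fun j => ee p X t beta l i j s * X j l ^ k).

Lemma d_ee p X t beta l i j x :
  is_derive (ee p X t beta l i j) x (X j l * ee p X t beta l i j x).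
Proof.
  unfold ee. auto_derive. auto. unfold Rminus. ring.
Qed.

Lemma d_Zk n p X t beta l i k x :
  is_derive (Zk n p X t beta l i k) x (Zk n p X t beta l i (S k) x).
Proof.
  unfold Zk. apply rsum_derive. intros j Hj.
  eapply dval. apply dmult. apply d_ee. apply dconst. simpl; ring.
Qed.

Lemma Z0_pos n p X t beta l i s : (i < n)%nat -> 0 < Zk n p X t beta l i 0 s.
Proof.
  intro Hi. unfold Zk.
  assert (Hnn : forall j, (j < n)%nat -> 0 <= ee p X t beta l i j s * X j l ^ 0).
  { intros j _. unfold ee, b2R. simpl.
    destruct (in_risk t i j); rewrite Rmult_1_r; [rewrite Rmult_1_l; left; apply exp_pos | lra]. }
  assert (Hle := rsum_ge_term n _ i Hnn Hi).
  assert (0 < ee p X t beta l i i s * X i l ^ 0).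
  { unfold ee, in_risk. destruct (Rle_dec (t i) (t i)); [|lra]. simpl.
    rewrite Rmult_1_l, Rmult_1_r. apply exp_pos. }
  lra.
Qed.

Lemma d_ratio n p X t beta l i k (x : R) : (i < n)%nat ->
  let Z := Zk n p X t beta l i in
  is_derive (fun s => Z k s / Z 0%nat s) x
    (Z (S k) x / Z 0%nat x - Z k x / Z 0%nat x * (Z 1%nat x / Z 0%nat x)).
Proof.
  intros Hi Z. assert (H0 := Z0_pos n p X t beta l i x Hi). fold Z in H0.
  unfold Z in *. eapply dval. apply is_derive_div; [apply d_Zk | apply d_Zk | lra]. field. lra.
Qed.

Lemma d_lnZ n p X t beta l i (x : R) : (i < n)%nat ->
  let Z := Zk n p X t beta l i in
  is_derive (fun s => ln (Z 0%nat s)) x (Z 1%nat x / Z 0%nat x).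
Proof.
  intros Hi Z. assert (H0 := Z0_pos n p X t beta l i x Hi). fold Z in H0.
  unfold Z in *. eapply dval; [apply (is_derive_comp ln); [apply is_derive_ln; exact H0 | apply d_Zk] |].
  reflexivity.
Qed.

Lemma risk_bounds_gen (L : list nat) (X : nat -> nat -> R) (t : nat -> R) (i l j : nat) :
  In j L -> in_risk t i j = true ->
  fold_right (fun k acc => if in_risk t i k then Rmin (X k l) acc else acc) (X i l) L <= X j l <=
  fold_right (fun k acc => if in_risk t i k then Rmax (X k l) acc else acc) (X i l) L.
Proof.
  intros Hin Hr. induction L as [|a L IH]; simpl in *. contradiction.
  destruct Hin as [->|Hin].
  - rewrite Hr. split; [apply Rmin_l | apply Rmax_l].
  - specialize (IH Hin). destruct (in_risk t i a).
    + split. eapply Rle_trans; [apply Rmin_r | apply IH].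
      eapply Rle_trans; [apply IH | apply Rmax_r].
    + exact IH.
Qed.

Lemma risk_bounds n X t i l j : (j < n)%nat -> in_risk t i j = true ->
  risk_min n X t i l <= X j l <= risk_max n X t i l.
Proof.
  intros Hj Hr. apply risk_bounds_gen; auto. apply in_seq. lia.
Qed.

Lemma b2R_nonneg b : 0 <= b2R b.
Proof. destruct b; simpl; lra. Qed.

Lemma per_i n p X t beta l i s : (i < n)%nat ->
  let Z := Zk n p X t beta l i in
  let m1 := Z 1%nat s / Z 0%nat s in
  let m2 := Z 2%nat s / Z 0%nat s in
  let m3 := Z 3%nat s / Z 0%nat s in
  let D := risk_max n X t i l - risk_min n X t i l in
  (0 <= m2 - m1 ^ 2 /\ m2 - m1 ^ 2 <= / 4 * D ^ 2) /\
  Rabs (m3 - 3 * m1 * m2 + 2 * m1 ^ 3) <= / (6 * sqrt 3) * Rabs D ^ 3.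
Proof.
  intros Hi Z m1 m2 m3 D.
  assert (He : forall j, (j < n)%nat -> 0 <= ee p X t beta l i j s).
  { intros j _. unfold ee. apply Rmult_le_pos. apply b2R_nonneg. left; apply exp_pos. }
  assert (Hy : forall j, (j < n)%nat -> ee p X t beta l i j s <> 0 ->
             risk_min n X t i l <= X j l <= risk_max n X t i l).
  { intros j Hj Hne. apply risk_bounds; auto. unfold ee, b2R in Hne.
    destruct (in_risk t i j); auto. exfalso; apply Hne; ring. }
  assert (HZ := Z0_pos n p X t beta l i s Hi).
  assert (Hm := moments n (fun j => ee p X t beta l i j s) (fun j => X j l)
                 (risk_min n X t i l) (risk_max n X t i l) He Hy HZ).
  cbv beta zeta in Hm. exact Hm.
Qed.

Theorem theorem2 (n p : nat) (X : nat -> nat -> R) (t : nat -> R)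
    (delta : nat -> bool) (beta : nat -> R) (l : nat) :
  (l < p)%nat ->
  (0 <= partial_n (cox_loss n p X t delta) 2 l beta
   /\ partial_n (cox_loss n p X t delta) 2 l beta
      <= / 4 * rsum n (fun i => b2R (delta i) *
                 (risk_max n X t i l - risk_min n X t i l) ^ 2))
  /\ Rabs (partial_n (cox_loss n p X t delta) 3 l beta)
      <= / (6 * sqrt 3) * rsum n (fun i => b2R (delta i) *
                 Rabs (risk_max n X t i l - risk_min n X t i l) ^ 3).
Proof.
  intro Hl.
  set (Z := Zk n p X t beta l).
  set (mm := fun i k s => Z i k s / Z i 0%nat s).
  set (d := fun i => b2R (delta i)).
  set (G := fun s => cox_loss n p X t delta (upd beta l s)).
  set (F1 := fun s => rsum n (fun i => d i * (mm i 1%nat s - X i l))).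
  set (F2 := fun s => rsum n (fun i => d i * (mm i 2%nat s - mm i 1%nat s ^ 2))).
  set (F3 := fun s => rsum n (fun i => d i *
               (mm i 3%nat s - 3 * mm i 1%nat s * mm i 2%nat s + 2 * mm i 1%nat s ^ 3))).
  assert (EG : forall s, G s = rsum n (fun i => d i *
      (ln (Z i 0%nat s) - (xbeta p X beta i + X i l * (s - beta l))))).
  { intro s. unfold G, cox_loss. apply rsum_ext. intros i Hi. unfold d.
    rewrite xbeta_upd by auto. f_equal. f_equal. f_equal.
    unfold Z, Zk. apply rsum_ext. intros j Hj. rewrite xbeta_upd by auto.
    unfold ee, b2R. destruct (in_risk t i j); simpl; ring. }
  assert (DG : forall y : R, is_derive G y (F1 y)).
  { intro y. apply (is_derive_ext (fun s => rsum n (fun i => d i *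
      (ln (Z i 0%nat s) - (xbeta p X beta i + X i l * (s - beta l)))))).
    intro s; rewrite EG; reflexivity.
    unfold F1. apply rsum_derive. intros i Hi.
    eapply dval. apply is_derive_scal. apply dminus. apply (d_lnZ n p X t beta l i y Hi).
    assert (H : is_derive (fun s : R => xbeta p X beta i + X i l * (s - beta l)) y (X i l))
      by (auto_derive; [auto | ring]).
    exact H. unfold mm, Z. reflexivity. }
  assert (DF1 : forall y : R, is_derive F1 y (F2 y)).
  { intro y. unfold F1, F2. apply rsum_derive. intros i Hi.
    eapply dval. apply is_derive_scal. apply dminus.
    apply (d_ratio n p X t beta l i 1 y Hi). apply dconst.
    unfold mm, Z. simpl. field. apply Rgt_not_eq. apply Z0_pos; auto. }
  assert (DF2 : forall y : R, is_derive F2 y (F3 y)).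
  { intro y. unfold F2, F3. apply rsum_derive. intros i Hi.
    eapply dval. apply is_derive_scal. apply dminus.
    apply (d_ratio n p X t beta l i 2 y Hi). apply is_derive_pow.
    apply (d_ratio n p X t beta l i 1 y Hi).
    unfold mm, Z. simpl. field. apply Rgt_not_eq. apply Z0_pos; auto. }
  assert (P2 : partial_n (cox_loss n p X t delta) 2 l beta = F2 (beta l)).
  { unfold partial_n. simpl. fold G.
    rewrite (Derive_ext (fun x => Derive G x) F1).
    apply is_derive_unique. apply DF1.
    intro s. apply is_derive_unique. apply DG. }
  assert (P3 : partial_n (cox_loss n p X t delta) 3 l beta = F3 (beta l)).
  { unfold partial_n. simpl. fold G.
    rewrite (Derive_ext (fun x => Derive (fun x0 => Derive G x0) x) F2).
    apply is_derive_unique. apply DF2.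
    intro s. rewrite (Derive_ext (fun x0 => Derive G x0) F1).
    apply is_derive_unique. apply DF1.
    intro s'. apply is_derive_unique. apply DG. }
  rewrite P2, P3. clear P2 P3.
  set (b := beta l).
  assert (PI := fun i Hi => per_i n p X t beta l i b Hi). cbv zeta in PI.
  split; [split|].
  - unfold F2. apply rsum_nonneg. intros i Hi. apply Rmult_le_pos. apply b2R_nonneg.
    apply (PI i Hi).
  - unfold F2. rewrite rsum_scal. apply rsum_le. intros i Hi.
    destruct (PI i Hi) as [[_ H] _].
    assert (0 <= d i) by apply b2R_nonneg.
    assert (d i * (mm i 2%nat b - mm i 1%nat b ^ 2) <=
            d i * (/ 4 * (risk_max n X t i l - risk_min n X t i l) ^ 2))
      by (apply Rmult_le_compat_l; auto).
    unfold d in *. lra.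
  - unfold F3. eapply Rle_trans. apply rsum_abs. rewrite rsum_scal. apply rsum_le. intros i Hi.
    destruct (PI i Hi) as [_ H].
    assert (0 <= d i) by apply b2R_nonneg.
    rewrite Rabs_mult, (Rabs_pos_eq (d i)) by auto.
    assert (d i * Rabs (mm i 3%nat b - 3 * mm i 1%nat b * mm i 2%nat b + 2 * mm i 1%nat b ^ 3) <=
            d i * (/ (6 * sqrt 3) * Rabs (risk_max n X t i l - risk_min n X t i l) ^ 3))
      by (apply Rmult_le_compat_l; auto).
    unfold d in *. lra.
Qed.
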